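(* For every $M\in\Lambda^{001}$, $H_r(\mathcal T(M))=\mathcal T(H(M))$.
   Context: $\Lambda^{001}$ is the set of possibly infinite λ-terms (trees of variables, abstractions $\lambda x.M$ and applications $(M)N$) whose infinite branches all enter infinitely often the argument position of an application, up to α-equivalence; $M[N/x]$ is capture-avoiding substitution. Every $M\in\Lambda^{001}$ is either of the form $\lambda x_1\dots\lambda x_m.(\dots((\lambda z.N)P)Q_1\dots)Q_n$ (with head redex $(\lambda z.N)P$) or of the form $\lambda x_1\dots\lambda x_m.(\dots((y)Q_1)\dots)Q_n$ (head normal form, hnf). $H(M)=\lambda x_1\dots\lambda x_m.(\dots((N[P/z])Q_1)\dots)Q_n$ in the first case and $H(M)=M$ in the second. Resource terms: $s::=x\mid\lambda x.s\mid\langle s\rangle\bar t$, with $\bar t$ a finite multiset of resource terms; constructors are extended by linearity to finite sums (finite sets of resource terms). Resource substitution $s\langle\bar t/x\rangle$, for $\bar t=[t_1,\dots,t_n]$, is the sum over $\sigma\in\mathfrak S_n$ of the terms obtained by substituting $t_{\sigma(i)}$ for the $i$-th free occurrence of $x$ in $s$ if $x$ has exactly $n$ free occurrences, and $0$ (empty) otherwise. Every resource term is $s=\lambda x_1\dots\lambda x_m.\langle\dots\langle u\rangle\bar t_1\dots\rangle\bar t_n$ with $u$ a variable or a redex $\langle\lambda z.v\rangle\bar w$; in the latter case $H_r(s)=\lambda x_1\dots\lambda x_m.\langle\dots\langle v\langle\bar w/z\rangle\rangle\bar t_1\dots\rangle\bar t_n$ (a finite sum), otherwise $H_r(s)=s$.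 For a set $\mathcal S$ of resource terms, $H_r(\mathcal S)=\bigcup_{s\in\mathcal S}H_r(s)$. Taylor approximation $\ltimes$ is inductive: $x\ltimes x$; $s\ltimes M\Rightarrow\lambda x.s\ltimes\lambda x.M$; ($s\ltimes M$ and $t_i\ltimes N$ for all $i$) $\Rightarrow\langle s\rangle[t_1,\dots,t_n]\ltimes(M)N$; $\mathcal T(M)=\{s : s\ltimes M\}$. *)

(* Defs.v *)
(* Terms use de Bruijn indices (so alpha-equivalence is syntactic equality). *)
From Stdlib Require Import List Arith Permutation.
Import ListNotations.

CoInductive term : Type :=
| Var : nat -> term
| Lam : term -> term
| App : term -> term -> term.

(* An inductive (hence finite) path from M using only "body of lambda" and
   "function position of application" steps must end at a variable:
   i.e. there is no infinite branch avoiding argument positions. *)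
Inductive WFleft : term -> Prop :=
| wfl_var n : WFleft (Var n)
| wfl_lam M : WFleft M -> WFleft (Lam M)
| wfl_app M N : WFleft M -> WFleft (App M N).

(* Lambda^{001}: every subterm satisfies WFleft, i.e. every infinite branch
   enters the argument position of an application infinitely often. *)
CoInductive L001 : term -> Prop :=
| l001_var n : L001 (Var n)
| l001_lam M : WFleft M -> L001 M -> L001 (Lam M)
| l001_app M N : WFleft M -> L001 M -> L001 N -> L001 (App M N).

CoFixpoint lift (c : nat) (M : term) : term :=
  match M with
  | Var n => Var (if n <? c then n else S n)
  | Lam M1 => Lam (lift (S c) M1)
  | App M1 M2 => App (lift c M1) (lift c M2)
  end.

(* subst k N M : capture-avoiding substitution of N (already lifted to the
   current depth) for index k, decrementing the indices above k *)
CoFixpoint subst (k : nat) (N : term) (M : term) : term :=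
  match M with
  | Var n => if n =? k then N else Var (if k <? n then pred n else n)
  | Lam M1 => Lam (subst (S k) (lift 0 N) M1)
  | App M1 M2 => App (subst k N M1) (subst k N M2)
  end.

(* M[P/z] for the outermost binder z of lambda z.N *)
Definition subst0 (N P : term) : term := subst 0 P N.

Inductive is_head_var : term -> Prop :=
| hv_var n : is_head_var (Var n)
| hv_app M N : is_head_var M -> is_head_var (App M N).

Inductive is_hnf : term -> Prop :=
| hnf_head M : is_head_var M -> is_hnf M
| hnf_lam M : is_hnf M -> is_hnf (Lam M).

Inductive Hspine : term -> term -> Prop :=
| hs_redex N P : Hspine (App (Lam N) P) (subst0 N P)
| hs_app M M' Q : Hspine M M' -> Hspine (App M Q) (App M' Q).

(* IsH M HM : HM = H(M)  (the head reduct, or M itself if M is a hnf) *)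
Inductive IsH : term -> term -> Prop :=
| ish_lam M M' : IsH M M' -> IsH (Lam M) (Lam M')
| ish_spine M M' : Hspine M M' -> IsH M M'
| ish_hnf M : is_hnf M -> IsH M M.

(* ---------- Resource terms (bags are lists, taken modulo permutation) ---------- *)
Inductive rterm : Type :=
| RVar : nat -> rterm
| RLam : rterm -> rterm
| RApp : rterm -> list rterm -> rterm.

Inductive requiv : rterm -> rterm -> Prop :=
| req_var n : requiv (RVar n) (RVar n)
| req_lam s s' : requiv s s' -> requiv (RLam s) (RLam s')
| req_app s s' ts ts' ts'' :
    requiv s s' -> Permutation ts' ts'' -> Forall2 requiv ts ts'' ->
    requiv (RApp s ts) (RApp s' ts').

Fixpoint rshift (d c : nat) (s : rterm) : rterm :=
  match s with
  | RVar n => RVar (if n <? c then n else n + d)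
  | RLam s1 => RLam (rshift d (S c) s1)
  | RApp s1 ts => RApp (rshift d c s1) (map (rshift d c) ts)
  end.

(* LSub d ts s r : r is one of the summands of s<ts/x>, where x is the
   variable of index d (at binder depth d): each element of the bag ts is
   substituted for exactly one free occurrence of x, in all possible ways;
   no summand exists if the numbers do not match. *)
Inductive LSub : nat -> list rterm -> rterm -> rterm -> Prop :=
| ls_hit d t : LSub d [t] (RVar d) (rshift d 0 t)
| ls_miss d n : n <> d -> LSub d [] (RVar n) (RVar (if d <? n then pred n else n))
| ls_lam d ts s r : LSub (S d) ts s r -> LSub d ts (RLam s) (RLam r)
| ls_app d ts ts0 tss s r us us' :
    Permutation ts (ts0 ++ concat tss) ->
    LSub d ts0 s r -> LSubBag d tss us us' ->
    LSub d ts (RApp s us) (RApp r us')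
with LSubBag : nat -> list (list rterm) -> list rterm -> list rterm -> Prop :=
| lsb_nil d : LSubBag d [] [] []
| lsb_cons d ts tss u us u' us' :
    LSub d ts u u' -> LSubBag d tss us us' -> LSubBag d (ts :: tss) (u :: us) (u' :: us').

Inductive ris_head_var : rterm -> Prop :=
| rhv_var n : ris_head_var (RVar n)
| rhv_app s ts : ris_head_var s -> ris_head_var (RApp s ts).

Inductive ris_hnf : rterm -> Prop :=
| rhnf_head s : ris_head_var s -> ris_hnf s
| rhnf_lam s : ris_hnf s -> ris_hnf (RLam s).

Inductive HRspine : rterm -> rterm -> Prop :=
| hrs_redex v w r : LSub 0 w v r -> HRspine (RApp (RLam v) w) r
| hrs_app s s' ts : HRspine s s' -> HRspine (RApp s ts) (RApp s' ts).

(* HR s r : r is a summand of H_r(s) *)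
Inductive HR : rterm -> rterm -> Prop :=
| hr_lam s r : HR s r -> HR (RLam s) (RLam r)
| hr_spine s r : HRspine s r -> HR s r
| hr_hnf s : ris_hnf s -> HR s s.

Definition rset := rterm -> Prop.

Inductive Tay : rterm -> term -> Prop :=
| tay_var n : Tay (RVar n) (Var n)
| tay_lam s M : Tay s M -> Tay (RLam s) (Lam M)
| tay_app s ts M N :
    Tay s M -> Forall (fun t => Tay t N) ts -> Tay (RApp s ts) (App M N).

Definition Taylor (M : term) : rset := fun s => Tay s M.

Definition Hr_set (S : rset) : rset := fun r => exists s, S s /\ HR s r.

Definition rset_eq (S1 S2 : rset) : Prop :=
  forall s, (exists s', requiv s s' /\ S1 s') <-> (exists s', requiv s s' /\ S2 s').

(* Main.v *)
Require Import Defs.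
From Stdlib Require Import List Arith Lia Permutation.
Import ListNotations.

Definition frob (t : term) : term :=
  match t with Var n => Var n | Lam M => Lam M | App a b => App a b end.
Lemma frob_eq t : t = frob t. Proof. destruct t; reflexivity. Qed.

Lemma subst_var k N n : subst k N (Var n) = if n =? k then N else Var (if k <? n then pred n else n).
Proof. rewrite (frob_eq (subst k N (Var n))); simpl. destruct (n =? k); auto. destruct N; auto. Qed.
Lemma subst_lam k N M : subst k N (Lam M) = Lam (subst (S k) (lift 0 N) M).
Proof. rewrite (frob_eq (subst k N (Lam M))); reflexivity. Qed.
Lemma subst_app k N M1 M2 : subst k N (App M1 M2) = App (subst k N M1) (subst k N M2).
Proof. rewrite (frob_eq (subst k N (App M1 M2))); reflexivity. Qed.
Lemma lift_var c n : lift c (Var n) = Var (if n <? c then n else S n).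
Proof. rewrite (frob_eq (lift c (Var n))); reflexivity. Qed.
Lemma lift_lam c M : lift c (Lam M) = Lam (lift (S c) M).
Proof. rewrite (frob_eq (lift c (Lam M))); reflexivity. Qed.
Lemma lift_app c M1 M2 : lift c (App M1 M2) = App (lift c M1) (lift c M2).
Proof. rewrite (frob_eq (lift c (App M1 M2))); reflexivity. Qed.

Fixpoint rterm_ind' (P : rterm -> Prop) (HV : forall n, P (RVar n))
  (HL : forall s, P s -> P (RLam s))
  (HA : forall s ts, P s -> Forall P ts -> P (RApp s ts)) (s : rterm) : P s :=
  match s with
  | RVar n => HV n
  | RLam s1 => HL s1 (rterm_ind' P HV HL HA s1)
  | RApp s1 ts => HA s1 ts (rterm_ind' P HV HL HA s1)
      ((fix go (l : list rterm) : Forall P l :=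
          match l with
          | [] => Forall_nil P
          | x :: l' => Forall_cons x (rterm_ind' P HV HL HA x) (go l')
          end) ts)
  end.

Fixpoint liftn (k : nat) (P : term) : term :=
  match k with 0 => P | S k => lift 0 (liftn k P) end.

Lemma rshift0 t c : rshift 0 c t = t.
Proof.
  revert c; induction t using rterm_ind'; intros c; simpl.
  - destruct (n <? c); f_equal; lia.
  - f_equal; auto.
  - f_equal; auto. rewrite Forall_forall in H.
    rewrite <- (map_id ts) at 2. apply map_ext_in; intros; auto.
Qed.

Lemma rshift_S t c d : rshift 1 c (rshift d c t) = rshift (S d) c t.
Proof.
  revert c; induction t using rterm_ind'; intros c; simpl.
  - repeat match goal with |- context [?a <? ?b] => destruct (Nat.ltb_spec a b) end;
      f_equal; lia.
  - f_equal; auto.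
  - f_equal; auto. rewrite map_map. rewrite Forall_forall in H.
    apply map_ext_in; intros; auto.
Qed.

Lemma Tay_lift t : forall c P, Tay t P -> Tay (rshift 1 c t) (lift c P).
Proof.
  induction t using rterm_ind'; intros c P HT; inversion HT; subst.
  - rewrite lift_var; simpl. destruct (n <? c).
    + constructor.
    + replace (n + 1) with (S n) by lia. constructor.
  - rewrite lift_lam; simpl; constructor; auto.
  - rewrite lift_app; simpl; constructor; auto.
    apply Forall_map. rewrite Forall_forall in *. intros; auto.
Qed.

Lemma collect {A B} (f : A -> B) (Q : A -> Prop) (l : list B) :
  Forall (fun r => exists t, r = f t /\ Q t) l -> exists us, l = map f us /\ Forall Q us.
Proof.
  induction l; intros H.
  - exists []; auto.
  - inversion H; subst. destruct H2 as (t & -> & Ht). destruct (IHl H3) as (us & -> & Hus).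
    exists (t :: us); split; auto.
Qed.

Lemma Tay_lift_inv r : forall c P, Tay r (lift c P) -> exists t, r = rshift 1 c t /\ Tay t P.
Proof.
  induction r using rterm_ind'; intros c P HT; destruct P as [m|P1|P1 P2];
    [rewrite lift_var in HT|rewrite lift_lam in HT|rewrite lift_app in HT|
     rewrite lift_var in HT|rewrite lift_lam in HT|rewrite lift_app in HT|
     rewrite lift_var in HT|rewrite lift_lam in HT|rewrite lift_app in HT];
    inversion HT; subst.
  - exists (RVar m); split; [simpl; destruct (m <? c); f_equal; lia | constructor].
  - destruct (IHr _ _ H1) as (t & -> & Ht). exists (RLam t); split; [reflexivity|constructor; auto].
  - destruct (IHr _ _ H3) as (t & -> & Ht).
    assert (Forall (fun r => exists t, r = rshift 1 c t /\ Tay t P2) ts) as HF.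
    { rewrite Forall_forall in *. intros x Hx. apply H; auto. }
    destruct (collect _ _ _ HF) as (us & -> & Hus).
    exists (RApp t us); split; [reflexivity| constructor; auto].
Qed.

Lemma Tay_liftn t d P : Tay t P -> Tay (rshift d 0 t) (liftn d P).
Proof.
  induction d; intros H; simpl.
  - rewrite rshift0; auto.
  - rewrite <- rshift_S. apply Tay_lift; auto.
Qed.

Lemma Tay_liftn_inv r d P : Tay r (liftn d P) -> exists t, r = rshift d 0 t /\ Tay t P.
Proof.
  revert r; induction d; intros r H; simpl in H.
  - exists r; rewrite rshift0; auto.
  - destruct (Tay_lift_inv _ _ _ H) as (r' & -> & Hr').
    destruct (IHd _ Hr') as (t & -> & Ht). exists t; split; auto. apply rshift_S.
Qed.

Scheme LSub_ind2 := Induction for LSub Sort Prop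
  with LSubBag_ind2 := Induction for LSubBag Sort Prop.
Combined Scheme LSub_mut from LSub_ind2, LSubBag_ind2.

Lemma Forall_perm {A} (Q : A -> Prop) l l' : Permutation l l' -> Forall Q l -> Forall Q l'.
Proof. intros Hp H. rewrite Forall_forall in *. intros x Hx. apply H.
  apply Permutation_in with l'; auto. apply Permutation_sym; auto. Qed.

Lemma sub_fwd_mut P :
  (forall d ts v r (_ : LSub d ts v r), forall M, Forall (fun t => Tay t P) ts -> Tay v M ->
     Tay r (subst d (liftn d P) M)) /\
  (forall d tss us us' (_ : LSubBag d tss us us'), forall M,
     Forall (fun t => Tay t P) (concat tss) -> Forall (fun u => Tay u M) us ->
     Forall (fun u => Tay u (subst d (liftn d P) M)) us').
Proof.
  apply LSub_mut; intros.
  - inversion H0; subst. rewrite subst_var, Nat.eqb_refl. apply Tay_liftn.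
    inversion H; auto.
  - inversion H0; subst. rewrite subst_var. rewrite (proj2 (Nat.eqb_neq _ _) n0). constructor.
  - inversion H1; subst. rewrite subst_lam. constructor. apply H; auto.
  - inversion H2; subst. rewrite subst_app. apply Forall_perm with (l' := ts0 ++ concat tss) in H1; auto.
    apply Forall_app in H1. destruct H1. constructor; auto.
  - constructor.
  - simpl in H1. apply Forall_app in H1. destruct H1. inversion H2; subst. constructor; auto.
Qed.

Lemma sub_bwd_var r d P m : Tay r (subst d (liftn d P) (Var m)) ->
  exists v ts, Tay v (Var m) /\ Forall (fun t => Tay t P) ts /\ LSub d ts v r.
Proof.
  rewrite subst_var. destruct (Nat.eqb_spec m d).
  - subst m. intros H. destruct (Tay_liftn_inv _ _ _ H) as (t & -> & Ht).
    exists (RVar d), [t]; repeat split; repeat constructor; auto.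
  - intros H; inversion H; subst. exists (RVar m), []; repeat split; repeat constructor; auto.
Qed.

Lemma collect_bag d P M2 (ts : list rterm) :
  Forall (fun u => exists u0 tsu, Tay u0 M2 /\ Forall (fun t => Tay t P) tsu /\ LSub d tsu u0 u) ts ->
  exists tss us, LSubBag d tss us ts /\ Forall (fun u => Tay u M2) us /\
     Forall (fun t => Tay t P) (concat tss).
Proof.
  induction ts; intros H.
  - exists [], []; repeat split; constructor.
  - inversion H as [|x l Hx Hl]; subst. destruct Hx as (u0 & tsu & K1 & K2 & K3).
    destruct (IHts Hl) as (tss & us & B1 & B2 & B3).
    exists (tsu :: tss), (u0 :: us); repeat split.
    + constructor; auto.
    + constructor; auto.
    + simpl. apply Forall_app; auto.
Qed.

Lemma sub_bwd r : forall d P M, Tay r (subst d (liftn d P) M) ->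
  exists v ts, Tay v M /\ Forall (fun t => Tay t P) ts /\ LSub d ts v r.
Proof.
  induction r using rterm_ind'; intros d P M HT; destruct M as [m|M1|M1 M2];
    try (apply sub_bwd_var; auto; fail);
    [rewrite subst_lam in HT|rewrite subst_app in HT|rewrite subst_lam in HT|
     rewrite subst_app in HT|rewrite subst_lam in HT|rewrite subst_app in HT];
    inversion HT; subst.
  - match goal with Hh : Tay r _ |- _ => destruct (IHr (S d) P M1 (Hh : Tay r (subst (S d) (liftn (S d) P) M1))) as (v & ts & J1 & J2 & J3) end.
    exists (RLam v), ts; repeat split; try constructor; auto.
  - match goal with Hh : Tay r _ |- _ => destruct (IHr d P M1 Hh) as (v & ts0 & J1 & J3 & J5) end.
    assert (Forall (fun u => exists u0 tsu, Tay u0 M2 /\ Forall (fun t => Tay t P) tsu /\ LSub d tsu u0 u) ts) as HF.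
    { rewrite Forall_forall in *. intros x Hx. apply H; auto. }
    destruct (collect_bag _ _ _ _ HF) as (tss & us & B1 & B2 & B3).
    exists (RApp v us), (ts0 ++ concat tss); repeat split.
    + constructor; auto.
    + apply Forall_app; auto.
    + eapply ls_app; eauto.
Qed.

Lemma Tay_head t M : Tay t M -> ris_head_var t -> is_head_var M.
Proof. intros HT Hh; revert M HT; induction Hh; intros M HT; inversion HT; subst; constructor; auto. Qed.
Lemma Tay_head' t M : Tay t M -> is_head_var M -> ris_head_var t.
Proof. intros HT Hh; revert t HT; induction Hh; intros t HT; inversion HT; subst; constructor; auto. Qed.
Lemma Tay_hnf t M : Tay t M -> ris_hnf t -> is_hnf M.
Proof. intros HT Hh; revert M HT; induction Hh; intros M HT.
  - constructor. eapply Tay_head; eauto.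
  - inversion HT; subst. apply hnf_lam; auto. Qed.
Lemma Tay_hnf' t M : Tay t M -> is_hnf M -> ris_hnf t.
Proof. intros HT Hh; revert t HT; induction Hh; intros t HT.
  - constructor. eapply Tay_head'; eauto.
  - inversion HT; subst. apply rhnf_lam; auto. Qed.

Lemma Hspine_nohead M M' : Hspine M M' -> is_head_var M -> False.
Proof. induction 1; intros Hh; inversion Hh; subst; auto. match goal with Hx : is_head_var (Lam _) |- _ => inversion Hx end. Qed.
Lemma HRspine_nohead t s : HRspine t s -> ris_head_var t -> False.
Proof. induction 1; intros Hh; inversion Hh; subst; auto. match goal with Hx : ris_head_var (RLam _) |- _ => inversion Hx end. Qed.

Lemma Hspine_nohnf M M' : Hspine M M' -> is_hnf M -> False.
Proof. intros H1 H2; inversion H2; subst. eapply Hspine_nohead; eauto. inversion H1. Qed.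

Lemma hnf_IsH M M' : IsH M M' -> is_hnf M -> M' = M.
Proof.
  induction 1; intros Hh.
  - inversion Hh; subst. inversion H0. rewrite IHIsH; auto.
  - exfalso; eapply Hspine_nohnf; eauto.
  - reflexivity.
Qed.

Lemma hnf_HR M : is_hnf M -> forall t s, Tay t M -> HR t s -> s = t.
Proof.
  induction 1; intros t s HT HR'.
  - pose proof (Tay_head' _ _ HT H) as Hh. inversion HR'; subst.
    + inversion Hh.
    + exfalso; eapply HRspine_nohead; eauto.
    + reflexivity.
  - inversion HT; subst. inversion HR'; subst.
    + f_equal. eapply IHis_hnf; eauto.
    + inversion H0.
    + reflexivity.
Qed.

Lemma Hspine_fwd M M' : Hspine M M' -> forall t s, Tay t M -> HRspine t s -> Tay s M'.
Proof.
  induction 1; intros t s HT HS.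
  - inversion HT; subst. inversion H2; subst. inversion HS; subst.
    + unfold subst0. match goal with HL : LSub 0 _ _ _ |- _ => eapply (proj1 (sub_fwd_mut P) _ _ _ _ HL) end; eauto.
    + inversion H5.
  - inversion HT; subst. inversion HS; subst.
    + inversion H3; subst. inversion H.
    + constructor; eauto.
Qed.

Lemma Hspine_bwd M M' : Hspine M M' -> forall s, Tay s M' -> exists t, Tay t M /\ HRspine t s.
Proof.
  induction 1; intros s HT.
  - unfold subst0 in HT. destruct (sub_bwd s 0 P N HT) as (v & ts & H1 & H2 & H3).
    exists (RApp (RLam v) ts); split.
    + constructor; [constructor; auto| auto].
    + constructor; auto.
  - inversion HT; subst. match goal with Hh : Tay _ M' |- _ => destruct (IHHspine _ Hh) as (t & Ht1 & Ht2) end.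
    exists (RApp t ts); split; constructor; auto.
Qed.

Lemma IsH_fwd M HM : IsH M HM -> forall t s, Tay t M -> HR t s -> Tay s HM.
Proof.
  induction 1; intros t s HT HR'.
  - inversion HT; subst. inversion HR'; subst.
    + constructor; eauto.
    + inversion H0.
    + inversion H0; subst. inversion H1.
      assert (Hm : is_hnf M) by (eapply Tay_hnf; eauto).
      rewrite (hnf_IsH _ _ H Hm). constructor; auto.
  - inversion HR'; subst.
    + inversion HT; subst. inversion H.
    + eapply Hspine_fwd; eauto.
    + exfalso. eapply Hspine_nohnf; eauto. eapply Tay_hnf; eauto.
  - rewrite (hnf_HR _ H _ _ HT HR'); auto.
Qed.

Lemma IsH_bwd M HM : IsH M HM -> forall s, Tay s HM -> exists t, Tay t M /\ HR t s.
Proof.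
  induction 1; intros s HT.
  - inversion HT; subst. match goal with Hh : Tay _ M' |- _ => destruct (IHIsH _ Hh) as (t & K2 & K3) end.
    exists (RLam t); split; constructor; auto.
  - destruct (Hspine_bwd _ _ H _ HT) as (t & H1 & H2). exists t; split; auto. apply hr_spine; auto.
  - exists s; split; auto. apply hr_hnf. eapply Tay_hnf'; eauto.
Qed.

Theorem mainTheorem9 :
  forall M : term, L001 M ->
  forall HM : term, IsH M HM ->
  rset_eq (Hr_set (Taylor M)) (Taylor HM).
Proof.
  intros M _ HM HI s; split.
  - intros (s' & Hq & t & Ht & Hr). exists s'; split; auto. eapply IsH_fwd; eauto.
  - intros (s' & Hq & Ht). exists s'; split; auto. unfold Taylor in Ht.
    destruct (IsH_bwd _ _ HI _ Ht) as (t & H1 & H2). exists t; split; auto.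
Qed.
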